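(* Let $u=0$ and $\theta\in(1/2,1]$. If there exists $p\in\mathbb R$ such that $$F\big(A^{\frac p2-1}BA^{-\frac p2}\big)\subseteq D(0,1)=\{z\in\mathbb C:|z|<1\},$$ then the $\theta$-method is unconditionally stable, i.e. it is stable for every step size $h=\tau/m$, $m\in\mathbb N$.
   Context: Let $N\in\mathbb N$, $\tau>0$, let $A\in M_N(\mathbb C)$ be Hermitian positive definite and $B\in M_N(\mathbb C)$ arbitrary, and consider the delay differential equation $y'(t)=-Ay(t)+By(t-\tau)$. Fix $\theta\in[0,1]$, $u\in[0,1)$ and $m\in\mathbb N$ (with $m\ge2$ if $u>0$), and set the step size $h=\tau/(m-u)$. The $\theta$-method (with linear interpolation of the delayed term) is the recursion, for $n\ge0$ and arbitrary starting values $y_{-m},\dots,y_0\in\mathbb C^N$, $$y_{n+1}=y_n+h(1-\theta)\big[-Ay_n+B((1-u)y_{n-m}+u\,y_{n-m+1})\big]+h\theta\big[-Ay_{n+1}+B((1-u)y_{n-m+1}+u\,y_{n-m+2})\big].$$ The method is called stable (for these $\theta,u,m,h$) if for every choice of starting values $y_n\to0$ as $n\to\infty$. For $s\in\mathbb R$, $A^s$ is defined through the spectral decomposition of $A$. For $M\in M_N(\mathbb C)$, $F(M)=\{x^*Mx: x\in\mathbb C^N,\ x^*x=1\}$ is the field of values. *)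

(* Defs.v *)
From HB Require Import structures.
From mathcomp Require Import all_boot all_order all_algebra.
From mathcomp Require Import complex.
From mathcomp Require Import reals exp.
Set Implicit Arguments. Unset Strict Implicit. Unset Printing Implicit Defensive.
Import Order.TTheory GRing.Theory Num.Theory.
Local Open Scope ring_scope.
Local Open Scope complex_scope.

Section Defs.
Variable R : realType.
Local Notation C := R[i].

Definition ctrmx (m n : nat) (M : 'M[C]_(m, n)) : 'M[C]_(n, m) :=
  (map_mx (@conjc R) M)^T.

Definition sesq (n : nat) (x : 'cV[C]_n) (M : 'M[C]_n) (y : 'cV[C]_n) : C :=
  (ctrmx x *m M *m y) 0 0.

Definition hermitian (n : nat) (A : 'M[C]_n) : Prop := ctrmx A = A.

Definition posdef (n : nat) (A : 'M[C]_n) : Prop :=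
  hermitian A /\ forall x : 'cV[C]_n, x != 0 -> 0 < sesq x A x.

Definition unitary_mx (n : nat) (U : 'M[C]_n) : Prop := U *m ctrmx U = 1%:M.

Definition fov (n : nat) (M : 'M[C]_n) : C -> Prop :=
  fun z => exists x : 'cV[C]_n, sesq x 1%:M x = 1 /\ z = sesq x M x.

Definition unit_disc : C -> Prop := fun z => `|z| < 1.

Definition spectral_decomp (n : nat) (A : 'M[C]_n) (U : 'M[C]_n) (d : 'rV[R]_n) :=
  unitary_mx U /\ A = U *m diag_mx (map_mx (real_complex R) d) *m ctrmx U.

(* A^s computed from a spectral decomposition (U, d) with d > 0 *)
Definition spec_pow (n : nat) (U : 'M[C]_n) (d : 'rV[R]_n) (s : R) : 'M[C]_n :=
  U *m diag_mx (map_mx (fun e => (powR e s)%:C) d) *m ctrmx U.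

(* y_k -> 0 (componentwise, equivalently in any norm on C^N) *)
Definition cv0 (n : nat) (y : nat -> 'cV[C]_n) : Prop :=
  forall eps : R, 0 < eps -> exists K : nat, forall k : nat, (K <= k)%N ->
    forall i : 'I_n, `|y k i 0| < eps%:C.

(* The theta-method with linear interpolation, indices shifted by m:
   z k = y_(k - m), so z 0 .. z m are the starting values y_(-m) .. y_0, and
   the recursion for n >= 0 reads as below. *)
Definition theta_rec (n : nat) (A B : 'M[C]_n) (theta u : R) (m : nat) (h : R)
    (z : nat -> 'cV[C]_n) : Prop :=
  forall k : nat,
    z (k + m).+1 = z (k + m)
      + (h * (1 - theta))%:C *: (- (A *m z (k + m))
            + B *m ((1 - u)%:C *: z k + u%:C *: z k.+1))
      + (h * theta)%:C *: (- (A *m z (k + m).+1)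
            + B *m ((1 - u)%:C *: z k.+1 + u%:C *: z k.+2)).

Definition theta_stable (n : nat) (A B : 'M[C]_n) (theta u : R) (m : nat) (h : R) :=
  forall z : nat -> 'cV[C]_n, theta_rec A B theta u m h z -> cv0 z.

End Defs.

(* Main.v *)
Require Import Defs.
From HB Require Import structures.
From mathcomp Require Import all_boot all_order all_algebra.
From mathcomp Require Import complex.
From mathcomp Require Import reals exp.
From mathcomp Require Import ring lra.
Import Order.TTheory GRing.Theory Num.Theory.
Local Open Scope ring_scope.
Local Open Scope complex_scope.
Section Scal.
Variable R : realType.
Local Notation C := R[i].

Definition nc (z : C) : R := Normc.normc z.
Lemma normE (z : C) : `|z| = (nc z)%:C. Proof. by case: z. Qed.
Lemma nc_ge0 z : 0 <= nc z.
Proof. by have := normr_ge0 z; rewrite normE lecE /= => /andP[]. Qed.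
Lemma ncD x y : nc (x + y) <= nc x + nc y.
Proof. by have := ler_normD x y; rewrite !normE -rmorphD lecR. Qed.
Lemma ncM x y : nc (x * y) = nc x * nc y.
Proof. exact: Normc.normcM. Qed.
Lemma ncX x k : nc (x ^+ k) = nc x ^+ k.
Proof.
elim: k => [|k IH]; first by rewrite !expr0 /nc Normc.normc1.
by rewrite !exprS ncM IH.
Qed.
Lemma nc0 : nc 0 = 0. Proof. exact: Normc.normc0. Qed.
Lemma nc_eq0 z : nc z = 0 -> z = 0. Proof. exact: Normc.eq0_normc. Qed.
Lemma ncN z : nc (- z) = nc z.
Proof. by apply: complexI; rewrite -!normE normrN. Qed.

Definition cvC (w : nat -> C) := forall eps : R, 0 < eps ->
  exists K, forall k, (K <= k)%N -> nc (w k) < eps.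

Lemma bern (d : R) n : 0 <= d -> 1 + n%:R * d <= (1 + d) ^+ n.
Proof.
move=> d0; elim: n => [|n IH]; first by rewrite mul0r addr0 expr0.
rewrite exprS -natr1.
have h1 : 0 <= n%:R * d by rewrite mulr_ge0.
have := ler_wpM2l (addr_ge0 ler01 d0) IH.
have : 0 <= n%:R * d * d by rewrite mulr_ge0.
nra.
Qed.

Lemma geo_small (r M eps : R) : 0 <= r -> r < 1 -> 0 < eps ->
  exists j, r ^+ j * M < eps.
Proof.
move=> r0 r1 e0.
have [M0|M0] := lerP M 0.
  by exists 0%N; rewrite expr0 mul1r; apply: le_lt_trans M0 e0.
have [->|rn0] := eqVneq r 0.
  by exists 1%N; rewrite expr1 mul0r.
have rp : 0 < r by rewrite lt_neqAle eq_sym rn0 r0.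
set d := r^-1 - 1.
have d0 : 0 < d by rewrite subr_gt0 invf_gt1.
have q0 : 0 <= M / (eps * d) by rewrite divr_ge0 // ?ltW // mulr_gt0.
exists (Num.Def.archi_bound (M / (eps * d))).
set j := Num.Def.archi_bound _.
have hj := archi_boundP q0; rewrite -/j in hj.
have hb := @bern d j (ltW d0).
have e1 : 1 + d = r^-1 by rewrite /d addrC subrK.
rewrite e1 exprVn in hb.
have rj : 0 < r ^+ j by rewrite exprn_gt0.
have h2 : M / (eps * d) * d < j%:R * d by rewrite ltr_pM2r.
have h3 : M / eps < j%:R * d.
  by move: h2; rewrite invfM mulrA -mulrA mulVf ?mulr1 // gt_eqF.
have h4 : M < eps * (j%:R * d) by rewrite -ltr_pdivrMl // mulrC.
have h5 : j%:R * d < (r ^+ j)^-1 by apply: lt_le_trans hb; rewrite ltrDr.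
have h6 : r ^+ j * (r ^+ j)^-1 = 1 by rewrite divrr // unitfE gt_eqF.
have h7 : 0 <= j%:R * d by rewrite mulr_ge0 // ltW.
nra.
Qed.

Lemma cv_step (l : C) (v w : nat -> C) : nc l < 1 -> cvC v ->
  (forall n, w n.+1 = l * w n + v n) -> cvC w.
Proof.
move=> l1 cv rec eps e0.
set r := nc l.
have r0 : 0 <= r := nc_ge0 l.
have c0 : 0 < (1 - r) * eps / 2 by rewrite divr_gt0 // mulr_gt0 // subr_gt0.
have [K HK] := cv _ c0.
set s := fun n => nc (w n) - eps / 2.
have stp : forall n, (K <= n)%N -> s n.+1 <= r * s n.
  move=> n Kn; rewrite /s rec.
  have := HK n Kn; have := ncD (l * w n) (v n); rewrite ncM -/r.
  have := nc_ge0 (w n). nra.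
have itr : forall j, s (K + j)%N <= r ^+ j * `|s K|.
  elim=> [|j IH]; first by rewrite addn0 expr0 mul1r ler_norm.
  rewrite addnS; apply: le_trans (stp _ (leq_addr _ _)) _.
  by rewrite exprS -mulrA ler_wpM2l.
have e2 : 0 < eps / 2 by rewrite divr_gt0.
have [j Hj] := @geo_small r `|s K| (eps / 2) r0 l1 e2.
exists (K + j)%N => k Kk.
have -> : k = (K + (k - K))%N by rewrite subnKC // (leq_trans (leq_addr _ _) Kk).
have := itr (k - K)%N.
have : r ^+ (k - K) <= r ^+ j.
  apply: ler_wiXn2l => //; first exact: ltW.
  by rewrite leq_subRL ?(leq_trans (leq_addr _ _) Kk) // addnC.
have := normr_ge0 (s K).
rewrite /s; set a := r ^+ (k - K); set b := r ^+ j.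
move: Hj; rewrite /s -/b.
set q := `|_|. move=> Hj qq ab H.
have : a * q <= b * q by rewrite ler_wpM2r.
lra.
Qed.
End Scal.
Arguments nc {R}.
Arguments cvC {R}.

Section App.
Variable R : realType.
Local Notation C := R[i].

Definition appK (K : nat) (p : {poly C}) (w : nat -> C) (n : nat) : C :=
  \sum_(k < K) p`_k * w (n + k)%N.
Definition app (p : {poly C}) (w : nat -> C) (n : nat) : C := appK (size p) p w n.

Lemma appKE K (p : {poly C}) (w : nat -> C) n : (size p <= K)%N -> appK K p w n = app p w n.
Proof.
move=> HK; rewrite /app /appK (big_ord_widen _ (fun k => p`_k * w (n + k)%N) HK).
rewrite [RHS]big_mkcond /=; apply: eq_bigr => k _.
by case: ifP => // /negbT; rewrite -leqNgt => /(nth_default 0) ->; rewrite mul0r.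
Qed.

Lemma app0 (w : nat -> C) n : app 0 w n = 0.
Proof. by rewrite /app size_poly0 /appK big_ord0. Qed.

Lemma appD (p q : {poly C}) (w : nat -> C) n : app (p + q) w n = app p w n + app q w n.
Proof.
set K := maxn (size p) (size q).
have hp : (size p <= K)%N by rewrite leq_maxl.
have hq : (size q <= K)%N by rewrite leq_maxr.
have hpq : (size (p + q)%R <= K)%N by rewrite (leq_trans (size_polyD p q)). 
rewrite -(appKE _ _ w n hp) -(appKE _ _ w n hq) -(appKE _ _ w n hpq) /appK -big_split /=.
by apply: eq_bigr => k _; rewrite coefD mulrDl.
Qed.

Lemma appZ (c : C) (p : {poly C}) (w : nat -> C) n : app (c *: p) w n = c * app p w n.
Proof.
rewrite -(appKE _ _ w n (size_scale_leq c p)) /appK /app mulr_sumr.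
by apply: eq_bigr => k _; rewrite coefZ mulrA.
Qed.

Lemma appMX (p : {poly C}) (w : nat -> C) n : app (p * 'X) w n = app p w n.+1.
Proof.
have hs : (size (p * 'X)%R <= (size p).+1)%N.
  by rewrite (leq_trans (size_polyMleq _ _)) // size_polyX addn2.
rewrite -(appKE _ _ w n hs) /appK big_ord_recl coefMX eqxx mul0r add0r /app /appK.
by apply: eq_bigr => k _; rewrite coefMX /= addnS.
Qed.

Lemma appC (c : C) (w : nat -> C) n : app c%:P w n = c * w n.
Proof.
rewrite -(appKE _ _ w n (size_polyC_leq1 c)) /appK big_ord1 coefC /= addn0 //.
Qed.

Lemma appXn k (w : nat -> C) n : app ('X^k) w n = w (n + k)%N.
Proof.
elim: k n => [|k IH] n.
  by rewrite expr0 -polyC1 appC mul1r addn0.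
by rewrite exprSr appMX IH addSnnS.
Qed.

Lemma app_ext (p : {poly C}) (w1 w2 : nat -> C) n : (forall t, w1 t = w2 t) -> app p w1 n = app p w2 n.
Proof. by move=> H; apply: eq_bigr => k _; rewrite H. Qed.

Lemma appM (p q : {poly C}) (w : nat -> C) n : app (p * q) w n = app p (app q w) n.
Proof.
elim/poly_ind: p q w n => [|p c IH] q w n.
  by rewrite mul0r !app0.
rewrite mulrDl mulrAC mul_polyC appD appZ appMX IH appD appMX appC.
by [].
Qed.

Lemma app_sumw (I : finType) (p : {poly C}) (f : I -> nat -> C) n :
  app p (fun t => \sum_i f i t) n = \sum_i app p (f i) n.
Proof.
rewrite /app /appK exchange_big /=; apply: eq_bigr => k _.
by rewrite mulr_sumr.
Qed.

Lemma app_sump (I : finType) (f : I -> {poly C}) (w : nat -> C) n :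
  app (\sum_i f i) w n = \sum_i app (f i) w n.
Proof.
apply: (big_rec2 (fun a b => app b w n = a)); first by rewrite app0.
by move=> i y1 y2 _ <-; rewrite appD.
Qed.

Lemma app_zero (p : {poly C}) n : app p (fun _ => 0) n = 0.
Proof. by rewrite /app /appK big1 // => k _; rewrite mulr0. Qed.

Lemma app1 (w : nat -> C) n : app 1 w n = w n.
Proof. by rewrite -polyC1 appC mul1r. Qed.

Definition mapp (N : nat) (Q : 'M[{poly C}]_N) (z : nat -> 'cV[C]_N) (n : nat)
  : 'cV[C]_N := \col_i \sum_j app (Q i j) (fun t => z t j 0) n.
Arguments mapp {N}.

Lemma mapp_mul N (Q1 Q2 : 'M[{poly C}]_N) z n :
  mapp (Q1 *m Q2) z n = mapp Q1 (mapp Q2 z) n.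
Proof.
apply/matrixP => i k; rewrite !mxE.
under eq_bigr => j _ do rewrite mxE app_sump.
rewrite exchange_big /=; apply: eq_bigr => l _.
rewrite (app_ext _ _ (fun t => \sum_j app (Q2 l j) (fun t0 => z t0 j 0) t)).
  by rewrite app_sumw; apply: eq_bigr => j _; rewrite appM.
by move=> t; rewrite mxE.
Qed.

Lemma mapp_zero N (Q : 'M[{poly C}]_N) n : mapp Q (fun _ => 0) n = 0.
Proof.
apply/matrixP => i k; rewrite !mxE big1 // => j _.
by rewrite (app_ext _ _ (fun _ => 0)) ?app_zero // => t; rewrite mxE.
Qed.

Lemma mapp_scalar N (q : {poly C}) z n (i : 'I_N) :
  mapp q%:M z n i 0 = app q (fun t => z t i 0) n.
Proof.
rewrite mxE (bigD1 i) //= big1 ?addr0; first by rewrite mxE eqxx mulr1n.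
by move=> j /negPf ji; rewrite mxE eq_sym ji mulr0n app0.
Qed.

End App.
Arguments app {R}.
Arguments appK {R}.
Arguments mapp {R N}.

Section Roots.
Variable R : realType.
Local Notation C := R[i].

Lemma cv_zero (w : nat -> C) : (forall n, w n = 0) -> cvC w.
Proof. by move=> H eps e0; exists 0%N => k _; rewrite H nc0. Qed.

Lemma cv_prod (rs : seq C) : (forall l, l \in rs -> nc l < 1) ->
  forall w : nat -> C, (forall n, app (\prod_(z <- rs) ('X - z%:P)) w n = 0) -> cvC w.
Proof.
elim: rs => [|l rs IH] Hl w Hw.
  by apply: cv_zero => n; rewrite -(Hw n) big_nil app1.
have l1 : nc l < 1 by apply: Hl; rewrite inE eqxx.
set v := app ('X - l%:P) w.
have cvv : cvC v.
  apply: IH; first by move=> x xr; apply: Hl; rewrite inE xr orbT.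
  move=> n; rewrite /v -appM mulrC -(Hw n) big_cons //.
apply: (@cv_step _ l v w l1 cvv) => n.
rewrite /v appD -polyCN appC -['X]mul1r appMX app1.
by rewrite mulNr addrCA subrr addr0.
Qed.

Lemma cv_poly (q : {poly C}) (w : nat -> C) : q != 0 ->
  (forall l, root q l -> nc l < 1) -> (forall n, app q w n = 0) -> cvC w.
Proof.
move=> q0 Hr Hw.
have [rs Hq] := closed_field_poly_normal q.
have lc0 : lead_coef q != 0 by rewrite lead_coef_eq0.
apply: (@cv_prod rs).
  move=> l lr; apply: Hr; rewrite Hq rootE hornerZ.
  by move: (root_prod_XsubC rs l); rewrite lr rootE => /eqP ->; rewrite mulr0.
move=> n; have := Hw n; rewrite {1}Hq appZ => /eqP.
by rewrite mulf_eq0 (negPf lc0) /= => /eqP.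
Qed.
End Roots.
Section Ctr.
Variable R : realType.
Local Notation C := R[i].

Lemma ctrmxM m n p (A : 'M[C]_(m, n)) (B : 'M[C]_(n, p)) :
  ctrmx (A *m B) = ctrmx B *m ctrmx A.
Proof. by rewrite /ctrmx map_mxM trmx_mul. Qed.

Lemma ctrmxK m n (A : 'M[C]_(m, n)) : ctrmx (ctrmx A) = A.
Proof.
by apply/matrixP => i j; rewrite /ctrmx !mxE conjcK.
Qed.

Lemma ctrmxZ m n (c : C) (A : 'M[C]_(m, n)) : ctrmx (c *: A) = c^*%C *: ctrmx A.
Proof. by apply/matrixP => i j; rewrite /ctrmx !mxE rmorphM. Qed.

Lemma ctrmx1 n : ctrmx (1%:M : 'M[C]_n) = 1%:M.
Proof.
by apply/matrixP => i j; rewrite /ctrmx !mxE eq_sym conjc_nat.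
Qed.

Lemma ctrmx_diag n (d : 'rV[R]_n) (f : R -> R) :
  ctrmx (diag_mx (map_mx (fun e => (f e)%:C) d)) = diag_mx (map_mx (fun e => (f e)%:C) d).
Proof.
apply/matrixP => i j; rewrite /ctrmx !mxE eq_sym.
have [->|ij] := eqVneq i j; first by rewrite ?eqxx !mulr1n conjc_real.
by rewrite ?(negPf ij) !mulr0n conjc0.
Qed.

Lemma sesq_self_ge0 n (v : 'cV[C]_n) : 0 <= (ctrmx v *m v) 0 0.
Proof.
rewrite mxE; apply: sumr_ge0 => i _; rewrite /ctrmx !mxE mulrC.
exact: mulcJ_ge0.
Qed.

Lemma sesq_self_eq0 n (v : 'cV[C]_n) : (ctrmx v *m v) 0 0 = 0 -> v = 0.
Proof.
rewrite mxE => H; apply/matrixP => i k; rewrite ord1 mxE.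
have h0 : forall j : 'I_n, true -> 0 <= ctrmx v 0 j * v j 0.
  by move=> j _; rewrite /ctrmx !mxE mulrC mulcJ_ge0.
have h1 := psumr_eq0P h0 H; have := h1 i isT.
rewrite /ctrmx !mxE mulrC => h.
by move/eqP: h; rewrite -sqr_normc expf_eq0 /= normr_eq0 => /eqP.
Qed.
End Ctr.
Section Spec.
Variable R : realType.
Local Notation C := R[i].

Lemma unitary_l n (U : 'M[C]_n) : unitary_mx U -> ctrmx U *m U = 1%:M.
Proof. by move=> HU; apply: mulmx1C. Qed.

Lemma spec_mul n (U : 'M[C]_n) (d : 'rV[R]_n) s t :
  unitary_mx U -> (forall j, 0 < d 0 j) ->
  spec_pow U d s *m spec_pow U d t = spec_pow U d (s + t).
Proof.
move=> HU Hd; rewrite /spec_pow -!mulmxA (mulmxA (ctrmx U) U) unitary_l // mul1mx.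
rewrite (mulmxA (diag_mx _) (diag_mx _)) mulmx_diag; congr (_ *m (_ *m _)); congr diag_mx.
apply/matrixP => i j; rewrite !mxE ord1 powRD ?(gt_eqF (Hd j)) ?implybT //.
by rewrite rmorphM.
Qed.

Lemma spec0 n (U : 'M[C]_n) (d : 'rV[R]_n) :
  unitary_mx U -> spec_pow U d 0 = 1%:M.
Proof.
move=> HU; rewrite /spec_pow.
have -> : map_mx (fun e => (e `^ 0)%:C) d = const_mx 1.
  by apply/matrixP => i j; rewrite !mxE powRr0.
by rewrite diag_const_mx mulmx1.
Qed.

Lemma spec1 n (A U : 'M[C]_n) (d : 'rV[R]_n) :
  spectral_decomp A U d -> (forall j, 0 < d 0 j) -> spec_pow U d 1 = A.
Proof.
move=> [HU ->] Hd; rewrite /spec_pow; congr (_ *m diag_mx _ *m _).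
apply/matrixP => i j; rewrite !mxE powRr1 // ord1 ltW //.
Qed.

Lemma spec_herm n (U : 'M[C]_n) (d : 'rV[R]_n) s :
  ctrmx (spec_pow U d s) = spec_pow U d s.
Proof.
by rewrite /spec_pow !ctrmxM ctrmxK ctrmx_diag mulmxA.
Qed.
End Spec.
Section Key.
Variable R : realType.
Local Notation C := R[i].

Lemma nc_real (k : R) : nc (k%:C) = `|k|.
Proof. by rewrite /nc /Normc.normc /= expr0n /= addr0 sqrtr_sqr. Qed.

Lemma ReD (u v : C) : complex.Re (u + v) = complex.Re u + complex.Re v. Proof. by case: u => a b; case: v => c e. Qed.
Lemma ReMr (u : C) (r : R) : complex.Re (u * r%:C) = complex.Re u * r.
Proof. by case: u => a b /=; rewrite mulr0 subr0. Qed.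

Lemma ge0_real (z : C) : 0 <= z -> z = (complex.Re z)%:C.
Proof.
rewrite lecE => /andP [/eqP hi _]; case: z hi => a b /= ->.
by [].
Qed.

Lemma re_nonneg (h t : R) (z : C) : 0 < h -> 1 / 2 < t -> t <= 1 -> 1 <= nc z ->
  0 <= complex.Re ((z - 1) * ((z * (h * t)%:C + (h * (1 - t))%:C))^*%C).
Proof.
move=> h0 t1 t2; case: z => x y; rewrite /nc /Normc.normc /= => r1.
set r := Num.sqrt _ in r1.
have s0 : 0 <= x ^+ 2 + y ^+ 2 by rewrite addr_ge0 ?sqr_ge0.
have rr : r ^+ 2 = x ^+ 2 + y ^+ 2 by rewrite sqr_sqrtr.
have xr : x <= r.
  apply: le_trans (ler_norm x) _; rewrite -sqrtr_sqr.
  by apply: ler_wsqrtr; rewrite lerDl sqr_ge0.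
have H1 : 0 <= h * ((r - 1) * (t * r + 1 - t)).
  apply: mulr_ge0; first lra.
  apply: mulr_ge0; first lra. nra.
have H2 : 0 <= h * ((2 * t - 1) * (r - x)).
  apply: mulr_ge0; first lra.
  apply: mulr_ge0; lra.
have H3 : h * t * r ^+ 2 = h * t * (x ^+ 2 + y ^+ 2) by rewrite rr.
nra.
Qed.

Lemma fov_bound n (M : 'M[C]_n) (v : 'cV[C]_n) :
  (forall z, fov M z -> unit_disc z) -> v != 0 ->
  nc (sesq v M v) < complex.Re ((ctrmx v *m v) 0 0).
Proof.
move=> Hf v0.
set be := (ctrmx v *m v) 0 0.
have bE : be = (complex.Re be)%:C by apply: ge0_real; exact: (@sesq_self_ge0 R _ v).
have bp : 0 < complex.Re be.
  have := @sesq_self_ge0 R _ v; rewrite -/be bE lecR le_eqVlt => /orP [/eqP h|//].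
  by case/negP: v0; apply/eqP; apply: (@sesq_self_eq0 R); rewrite -/be bE -h.
set b' := complex.Re be in bE bp *.
set s := (Num.sqrt b')^-1.
have sp : 0 < s by rewrite invr_gt0 sqrtr_gt0.
have ss : s * s * b' = 1.
  by rewrite /s -invfM -expr2 sqr_sqrtr ?ltW // mulVf // gt_eqF.
have hz : forall Q : 'M[C]_n, sesq (s%:C *: v) Q (s%:C *: v) = (s * s)%:C * sesq v Q v.
  move=> Q; rewrite /sesq ctrmxZ conjc_real.
  have -> : s%:C *: ctrmx v *m Q *m (s%:C *: v) = (s * s)%:C *: (ctrmx v *m Q *m v).
    by rewrite -!scalemxAl -scalemxAr scalerA rmorphM.
  by rewrite [LHS]mxE.
have Hw : fov M (sesq (s%:C *: v) M (s%:C *: v)).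
  exists (s%:C *: v); split => //.
  by rewrite hz /sesq mulmx1 -/be bE -rmorphM ss.
have := Hf _ Hw; rewrite /unit_disc normE hz ncM nc_real ger0_norm ?mulr_ge0 ?ltW //.
rewrite -(rmorph1 (real_complex R)) ltcR => H.
have : s * s * nc (sesq v M v) < s * s * b' by rewrite ss.
by rewrite ltr_pM2l // mulr_gt0.
Qed.
End Key.
Section Det.
Variable R : realType.
Local Notation C := R[i].

Lemma comb3 n (X Y Z : 'cV[C]_n) (e1 e2 e3 a b : C) :
  e1 *: (X + b *: Y) + e2 *: (a *: Y - X) + e3 *: (- (b *: Z)) + - (a *: Z) =
  (e1 - e2) *: X + (e1 * b + e2 * a) *: Y + (- (e3 * b) - a) *: Z.
Proof. apply/matrixP => i j; rewrite !mxE; ring. Qed.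

Lemma absL1 n (sp : R -> 'M[C]_n) (Hm : forall s t, sp s *m sp t = sp (s + t))
  (Hh : forall s, ctrmx (sp s) = sp s) (vv : 'cV[C]_n) a b c : a + b + a = c + c ->
  ctrmx (sp a *m vv) *m sp b *m (sp a *m vv) = ctrmx (sp c *m vv) *m (sp c *m vv).
Proof.
move=> e; rewrite !ctrmxM !Hh !mulmxA -(mulmxA (ctrmx vv)) Hm -(mulmxA (ctrmx vv)) Hm.
by rewrite -(mulmxA (ctrmx vv) (sp c)) Hm e.
Qed.

Lemma absL2 n (sp : R -> 'M[C]_n) (Hm : forall s t, sp s *m sp t = sp (s + t))
  (Hh : forall s, ctrmx (sp s) = sp s) (H0 : sp 0 = 1%:M) (vv : 'cV[C]_n) a b e :
  a + b + e + a = 0 ->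
  ctrmx (sp a *m vv) *m sp b *m (sp e *m (sp a *m vv)) = ctrmx vv *m vv.
Proof.
move=> E; rewrite !ctrmxM !Hh !mulmxA -(mulmxA (ctrmx vv)) Hm -(mulmxA (ctrmx vv)) Hm.
by rewrite -(mulmxA (ctrmx vv)) Hm E H0 mulmx1.
Qed.

Lemma absL3 n (sp : R -> 'M[C]_n) (Hm : forall s t, sp s *m sp t = sp (s + t))
  (Hh : forall s, ctrmx (sp s) = sp s) (B : 'M[C]_n) (vv : 'cV[C]_n) a b f :
  a + b = f ->
  ctrmx (sp a *m vv) *m sp b *m (B *m (sp a *m vv)) = ctrmx vv *m (sp f *m B *m sp a) *m vv.
Proof.
move=> E; rewrite !ctrmxM !Hh !mulmxA -(mulmxA (ctrmx vv)) Hm E.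
by rewrite -!(mulmxA (ctrmx vv)).
Qed.

Lemma key_det n (A B U : 'M[C]_n) (d : 'rV[R]_n) (p h t : R) (m : nat) (z : C) :
  spectral_decomp A U d -> (forall j, 0 < d 0 j) ->
  (forall w, fov (spec_pow U d (p / 2 - 1) *m B *m spec_pow U d (- (p / 2))) w ->
     unit_disc w) ->
  0 < h -> 1 / 2 < t -> t <= 1 -> 1 <= nc z ->
  \det (z ^+ m.+1 *: (1%:M + (h * t)%:C *: A) + z ^+ m *: ((h * (1 - t))%:C *: A - 1%:M)
        + z *: (- ((h * t)%:C *: B)) + - ((h * (1 - t))%:C *: B)) != 0.
Proof.
move=> HA Hd Hf h0 t1 t2 z1.
set b := (h * t)%:C; set a := (h * (1 - t))%:C.
set P := (X in \det X).
apply/negP; rewrite -det_tr => /det0P [v v0 hv].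
set x := v^T.
have x0 : x != 0 by rewrite /x -trmx0 (inj_eq trmx_inj).
have hx : P *m x = 0 by rewrite /x -[P]trmxK -trmx_mul hv trmx0.
set mu := z * b + a.
have E : P *m x = (z ^+ m * (z - 1)) *: x + (z ^+ m * mu) *: (A *m x) + (- mu) *: (B *m x).
  rewrite /P !mulmxDl -!scalemxAl mulmxDl mulmxBl !mul1mx -!scalemxAl !mulNmx -!scalemxAl.
  rewrite comb3; congr (_ *: _ + _ *: _ + _ *: _).
  - by rewrite exprS; ring.
  - by rewrite /mu exprS; ring.
  - by rewrite /mu; ring.
have [mu0|mu0] := eqVneq mu 0.
  move: hx; rewrite E mu0 mulr0 oppr0 !scale0r !addr0 => /eqP.
  rewrite scalemx_eq0 (negPf x0) orbF mulf_eq0 expf_eq0 subr_eq0 => /orP [/andP [_ /eqP z0]|/eqP z0].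
    by move: z1; rewrite z0 nc0 ler10.
  move: mu0; rewrite /mu z0 mul1r /b /a -rmorphD /= => /eqP.
  rewrite -(rmorph0 (real_complex R)) => /eqP /complexI.
  have -> : h * t + h * (1 - t) = h by ring.
  by move=> h00; move: h0; rewrite h00 ltxx.
have HU := HA.1.
set sp := spec_pow U d.
set W := sp (p / 2); set Y := sp (- (p / 2)); set G := sp (p - 1).
have [vv xY vv0] : exists2 vv, x = Y *m vv & vv != 0.
  have xY : x = Y *m (W *m x).
    rewrite mulmxA /Y /W spec_mul // (_ : - (p / 2) + p / 2 = 0) ?spec0 ?mul1mx //.
    by rewrite addrC subrr.
  exists (W *m x) => //.
  by apply: contra x0 => /eqP vz; rewrite xY vz mulmx0.
have SE : (z ^+ m * (z - 1)) * (ctrmx x *m G *m x) 0 0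
        + (z ^+ m * mu) * (ctrmx x *m G *m (A *m x)) 0 0
        + (- mu) * (ctrmx x *m G *m (B *m x)) 0 0 = 0.
  have SE0 : (ctrmx x *m G *m (P *m x)) 0 0 = 0 by rewrite hx mulmx0 mxE.
  move: SE0; rewrite E !mulmxDr -!scalemxAr.
  move: (ctrmx x *m G *m x) (ctrmx x *m G *m (A *m x)) (ctrmx x *m G *m (B *m x)) => M1 M2 M3.
  by rewrite !mxE.
set S := sp (- (1 / 2)).
have Hm : forall s t, sp s *m sp t = sp (s + t) by move=> s0 t0; apply: spec_mul.
have Hh : forall s, ctrmx (sp s) = sp s by move=> s0; apply: spec_herm.
have Ha : ctrmx x *m G *m x = ctrmx (S *m vv) *m (S *m vv).
  by rewrite xY; apply: (@absL1 _ sp Hm Hh); lra.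
have Hb : ctrmx x *m G *m (A *m x) = ctrmx vv *m vv.
  rewrite -(@spec1 R _ A U d HA Hd) xY; apply: (@absL2 _ sp Hm Hh); first exact: spec0.
  lra.
have Hg : ctrmx x *m G *m (B *m x) = ctrmx vv *m (sp (p / 2 - 1) *m B *m Y) *m vv.
  by rewrite xY; apply: (@absL3 _ sp Hm Hh); lra.
rewrite Ha Hb Hg in SE.
have Hgb := @fov_bound R _ _ vv Hf vv0.
set al := (ctrmx (S *m vv) *m (S *m vv)) 0 0 in SE.
set be := (ctrmx vv *m vv) 0 0 in SE Hgb.
set ga := ((ctrmx vv *m (sp (p / 2 - 1) *m B *m Y) *m vv) 0 0) in SE.
have gaE : ga = sesq vv (spec_pow U d (p / 2 - 1) *m B *m spec_pow U d (- (p / 2))) vv by [].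
rewrite -gaE in Hgb.
have alE : al = (complex.Re al)%:C by apply: ge0_real; exact: (@sesq_self_ge0 R _ (S *m vv)).
have beE : be = (complex.Re be)%:C by apply: ge0_real; exact: (@sesq_self_ge0 R _ vv).
have al0 : 0 <= complex.Re al by rewrite -lecR -alE; exact: (@sesq_self_ge0 R _ (S *m vv)).
set al' := complex.Re al in alE al0.
set be' := complex.Re be in beE Hgb.
set L := (z - 1) * mu^*%C * al + (mu * mu^*%C) * be.
have Eq : z ^+ m * L = (mu * mu^*%C) * ga.
  apply/eqP; rewrite -subr_eq0 -(mulr0 (mu^*%C)) -SE; apply/eqP; rewrite /L; ring.
have n2E : mu * mu^*%C = (nc mu ^+ 2)%:C by rewrite -sqr_normc normE rmorphXn.
have := congr1 nc Eq; rewrite ncM ncX n2E ncM nc_real ger0_norm ?exprn_ge0 ?nc_ge0 //.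
set NL := nc L; set Pz := nc z ^+ m; set n2 := nc mu ^+ 2 => EqN.
have RL : `|complex.Re L| <= NL.
  by have := normc_ge_Re L; rewrite normE lecR.
have ReL : complex.Re L = complex.Re ((z - 1) * mu^*%C) * al' + n2 * be'.
  by rewrite /L alE beE n2E -rmorphM ReD ReMr.
have Q0 : 0 <= complex.Re ((z - 1) * mu^*%C).
  by rewrite /mu /b /a; apply: re_nonneg.
have n20 : 0 < n2.
  rewrite exprn_gt0 // lt_neqAle nc_ge0 andbT eq_sym.
  by apply/eqP => /nc_eq0 mz; move/eqP: mu0.
have P1 : 1 <= Pz by rewrite exprn_ege1.
have NL0 : 0 <= NL by apply: nc_ge0.
have QA : 0 <= complex.Re ((z - 1) * mu^*%C) * al' by rewrite mulr_ge0.
have G1 : n2 * nc ga < n2 * be' by rewrite ltr_pM2l.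
have G2 : NL <= Pz * NL by rewrite ler_peMl.
have G3 : complex.Re L <= `|complex.Re L| by apply: ler_norm.
lra.
Qed.
End Det.
Section Main.
Variable R : realType.
Local Notation C := R[i].

Lemma mapp_ext N (Q : 'M[{poly C}]_N) (z1 z2 : nat -> 'cV[C]_N) n :
  (forall t, z1 t = z2 t) -> mapp Q z1 n = mapp Q z2 n.
Proof.
move=> H; apply/matrixP => i k; rewrite !mxE; apply: eq_bigr => j _.
by apply: app_ext => t; rewrite H.
Qed.

Lemma unif N (z : nat -> 'cV[C]_N) :
  (forall i : 'I_N, cvC (fun t => z t i 0)) -> cv0 z.
Proof.
move=> H eps e0.
have : forall s : seq 'I_N, exists K, forall k, (K <= k)%N ->
    forall i, i \in s -> nc (z k i 0) < eps.
  elim=> [|i s [K HK]]; first by exists 0%N.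
  have [Ki HKi] := H i eps e0.
  exists (maxn K Ki) => k kK j; rewrite inE => /orP [/eqP ->|js].
    by apply: HKi; apply: leq_trans kK; rewrite leq_maxr.
  by apply: HK => //; apply: leq_trans kK; rewrite leq_maxl.
move=> /(_ (enum 'I_N)) [K HK]; exists K => k kK i.
by rewrite normE ltcR; apply: HK; rewrite ?mem_enum.
Qed.

Definition Qmat N (C1 C2 C3 C4 : 'M[C]_N) (m : nat) : 'M[{poly C}]_N :=
  \matrix_(i, j) (C1 i j *: 'X^(m.+1) + C2 i j *: 'X^m + C3 i j *: 'X^1 + (C4 i j)%:P).
Arguments Qmat {N}.

Lemma mappQ N (C1 C2 C3 C4 : 'M[C]_N) (m : nat) (z : nat -> 'cV[C]_N) (n : nat) :
  mapp (Qmat C1 C2 C3 C4 m) z n =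
  C1 *m z (n + m).+1 + C2 *m z (n + m)%N + C3 *m z n.+1 + C4 *m z n.
Proof.
apply/matrixP => i k; rewrite ord1 !mxE -!big_split /=; apply: eq_bigr => j _.
by rewrite !mxE !appD !appZ !appXn appC addnS addn1.
Qed.

Lemma hornerQ N (C1 C2 C3 C4 : 'M[C]_N) (m : nat) (x : C) :
  map_mx (horner_eval x) (Qmat C1 C2 C3 C4 m) =
  x ^+ m.+1 *: C1 + x ^+ m *: C2 + x *: C3 + C4.
Proof.
apply/matrixP => i j; rewrite /horner_eval !mxE !hornerE /=.
by rewrite !(mulrC (x ^+ _)) (mulrC x).
Qed.

End Main.
Arguments Qmat {R N}.
Theorem mainTheorem3 (R : realType) (N : nat) (tau : R) (A B : 'M[R[i]]_N)
    (theta : R) :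
  0 < tau -> posdef A -> 1 / 2 < theta -> theta <= 1 ->
  (exists p : R, exists (U : 'M[R[i]]_N) (d : 'rV[R]_N),
      spectral_decomp A U d /\ (forall j, 0 < d 0 j) /\
      (forall z, fov (spec_pow U d (p / 2 - 1) *m B *m spec_pow U d (- (p / 2))) z ->
                 unit_disc z)) ->
  forall m : nat, (0 < m)%N -> theta_stable A B theta 0 m (tau / m%:R).
Proof.
move=> tau0 _ t1 t2 [p [U [d [HA [Hd Hf]]]]] m m0 z Hrec.
set h := tau / m%:R.
have h0 : 0 < h by rewrite divr_gt0 // ltr0n.
set b := (h * theta)%:C; set a := (h * (1 - theta))%:C.
set C1 := 1%:M + b *: A; set C2 := a *: A - 1%:M.
set C3 := - (b *: B); set C4 := - (a *: B).
set Q := Qmat C1 C2 C3 C4 m.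
have HQ : forall n, mapp Q z n = 0.
  move=> n; rewrite /Q mappQ.
  have := Hrec n; rewrite subr0 rmorph1 rmorph0 !scale1r !scale0r !addr0 -/a -/b => H.
  rewrite /C1 /C2 /C3 /C4 !mulmxDl ?mulmxBl !mulNmx !mul1mx -!scalemxAl.
  move: H.
  move: (A *m z (n + m).+1) (A *m z (n + m)%N) (B *m z n.+1) (B *m z n) => X1 X2 X3 X4.
  move: (z (n + m).+1) (z (n + m)%N) => Y1 Y2 H.
  apply/matrixP => i j; rewrite !mxE; move/matrixP: H => /(_ i j); rewrite !mxE => ->.
  ring.
have Hq : forall (i : 'I_N) n, app (\det Q) (fun t => z t i 0) n = 0.
  move=> i n; rewrite -mapp_scalar -mul_adj_mx mapp_mul.
  rewrite (@mapp_ext _ _ _ (mapp Q z) (fun _ => 0)) ?mapp_zero ?mxE //.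
have Hroot : forall x : R[i], 1 <= nc x -> ~~ root (\det Q) x.
  move=> x x1; rewrite rootE -[_.[x]]/(horner_eval x (\det Q)) -det_map_mx.
  rewrite /Q hornerQ /C1 /C2 /C3 /C4 /b /a.
  exact: (@key_det R N A B U d p h theta m x HA Hd Hf h0 t1 t2 x1).
have q0 : \det Q != 0.
  have n1 : 1 <= nc (1 : R[i]) by rewrite /nc Normc.normc1.
  by apply: contraNneq (Hroot 1 n1) => ->; rewrite root0.
apply: unif => i.
apply: (@cv_poly _ (\det Q)) => //.
move=> l rl; rewrite ltNge; apply/negP => l1.
by move: (Hroot l l1); rewrite rl.
Qed.
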